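(* Let $m\ge3$ be an integer and let $\mathbf{C}$ be a binary linear $[2^{2m-2}+2^{m-1}-1,\ 2m-1]$ code whose set of nonzero weights is $\{2^{2m-3},\,2^{2m-3}+2^{m-2},\,2^{2m-3}+2^{m-1}\}$. Then the code $\mathbf{C}'$ obtained from $\mathbf{C}$ by the extension construction is a minimal binary linear $[3\cdot2^{2m-3}-1,\ 2m-1,\ 2^{2m-3}]_2$ code with maximum weight $2^{2m-2}$ which violates the Ashikhmin–Barg condition. Moreover, when $m\ge4$, $\mathbf{C}'$ is self-orthogonal.
   Context: Extension construction for a binary $[N,K]$ code $\mathbf{D}$, $K\ge2$, with minimum nonzero weight $w_{min}$, maximum weight $w_{max}$ and $n'=2w_{min}-w_{max}\ge1$: choose a basis $\mathbf{r}_1,\dots,\mathbf{r}_K$ with $wt(\mathbf{r}_1)=w_{max}$, $wt(\mathbf{r}_2)=w_{min}$; the extended code is generated by $(\mathbf{1},\mathbf{r}_1),(\mathbf{0},\mathbf{r}_2),\dots,(\mathbf{0},\mathbf{r}_K)$ in $\mathbf{F}_2^{n'+N}$, with $\mathbf{1},\mathbf{0}\in\mathbf{F}_2^{n'}$. Self-orthogonal: $\mathbf{C}\subseteq\mathbf{C}^\perp$. Minimal code: nonzero codewords with nested supports are equal. Ashikhmin–Barg condition (binary): $w_{min}/w_{max}>1/2$. *)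

(* Defs.v *)
From HB Require Import structures.
From mathcomp Require Import all_boot all_order all_algebra.
Set Implicit Arguments. Unset Strict Implicit. Unset Printing Implicit Defensive.
Import GRing.Theory.
Local Open Scope ring_scope.

Notation bvec n := 'rV['F_2]_n.
Notation bcode n := {vspace 'rV['F_2]_n}.

Definition wt n (v : bvec n) : nat := #|[pred i : 'I_n | v 0 i != 0]|.

Definition supp n (v : bvec n) : {set 'I_n} := [set i | v 0 i != 0].

Definition wmin n (C : bcode n) : nat :=
  \big[minn/n]_(v : bvec n | (v \in C) && (v != 0)) wt v.
Definition wmax n (C : bcode n) : nat := \max_(v : bvec n | v \in C) wt v.

Definition dotp n (u v : bvec n) : 'F_2 := \sum_(i < n) u 0 i * v 0 i.

Definition self_orthogonal n (C : bcode n) : Prop :=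
  forall u v, u \in C -> v \in C -> dotp u v = 0.

Definition minimal_code n (C : bcode n) : Prop :=
  forall u v, u \in C -> v \in C -> u != 0 -> v != 0 ->
    supp u \subset supp v -> u = v.

Definition ashikhmin_barg n (C : bcode n) : Prop :=
  (1 / 2 : rat) < (wmin C)%:R / (wmax C)%:R.

(* Extension construction: given a basis r = [:: r_1; r_2; ...; r_K] of D
   (with wt r_1 = wmax, wt r_2 = wmin, imposed separately), the extended code
   is spanned by (1, r_1), (0, r_2), ..., (0, r_K) in F_2^(n' + N). *)
Definition ext_gens n' N (r : seq (bvec N)) : seq (bvec (n' + N)) :=
  match r with
  | [::] => [::]
  | r1 :: rs => row_mx (const_mx 1) r1 :: map (row_mx 0) rs
  end.

Definition ext_code n' N (r : seq (bvec N)) : bcode (n' + N) :=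
  <<ext_gens n' r>>%VS.

(* Main.v *)
Require Import Defs.
From HB Require Import structures.
From mathcomp Require Import all_boot all_order all_algebra.
From mathcomp Require Import zify.
Set Implicit Arguments. Unset Strict Implicit. Unset Printing Implicit Defensive.
Import GRing.Theory Num.Theory Order.TTheory.
Local Open Scope ring_scope.


Lemma F2_cases (x : 'F_2) : x = 0 \/ x = 1.
Proof. case: x => [[|[|//]]] Hx; [left|right]; exact/val_inj. Qed.

Lemma F2_neq0 (x : 'F_2) : (x != 0) = (x == 1).
Proof. by case: (F2_cases x) => ->. Qed.

Lemma wtE n (v : bvec n) : wt v = #|supp v|.
Proof. by rewrite /wt /supp cardsE. Qed.

Lemma wt_row_mx n1 n2 (u : bvec n1) (v : bvec n2) : wt (row_mx u v) = (wt u + wt v)%N.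
Proof.
rewrite /wt -!sum1_card big_split_ord /=; congr (_ + _)%N; apply: eq_bigl => i;
  by rewrite !inE ?row_mxEl ?row_mxEr.
Qed.

Lemma wt0 n : wt (0 : bvec n) = 0%N.
Proof. by apply: eq_card0 => i; rewrite inE mxE eqxx. Qed.

Lemma wt1 n : wt (const_mx 1 : bvec n) = n.
Proof. by rewrite /wt -[RHS]card_ord; apply: eq_card => i; rewrite inE mxE. Qed.

Lemma wt_sub n (u v : bvec n) : supp u \subset supp v -> wt (v - u) = (wt v - wt u)%N.
Proof.
move=> /subsetP H; rewrite !wtE -cardsDS; last by apply/subsetP.
suff -> : supp (v - u) = supp v :\: supp u by [].
apply/setP => i; move: (H i); rewrite !inE !mxE.
by case: (F2_cases (u 0 i)) => ->; case: (F2_cases (v 0 i)) => -> //=; move/(_ isT).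
Qed.

Lemma wt_add n (u v : bvec n) :
  (wt u + wt v = wt (u + v) + 2 * #|supp u :&: supp v|)%N.
Proof.
rewrite !wtE.
have -> : supp (u + v) = (supp u :|: supp v) :\: (supp u :&: supp v).
  apply/setP => i; rewrite !inE !mxE.
  by case: (F2_cases (u 0 i)) => ->; case: (F2_cases (v 0 i)) => ->.
rewrite cardsDS ?subsetIl ?subsetUl //; last first.
  by apply: subset_trans (subsetIl _ _) (subsetUl _ _).
rewrite cardsU; have := subset_leq_card (subsetIl (supp u) (supp v)).
have := subset_leq_card (subsetIr (supp u) (supp v)). lia.
Qed.

Lemma dotpE n (u v : bvec n) : dotp u v = (#|supp u :&: supp v|)%:R.
Proof.
rewrite /dotp -sum1_card natr_sum [RHS]big_mkcond /=; apply: eq_bigr => i _.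
rewrite !inE.
by case: (F2_cases (u 0 i)) => ->; case: (F2_cases (v 0 i)) => ->; rewrite ?mul0r ?mulr0 ?mulr1.
Qed.


Lemma span_row0 n' N (rs : seq (bvec N)) (y : bvec (n' + N)) :
  y \in <<map (row_mx (0 : bvec n')) rs>>%VS -> exists2 c, c \in <<rs>>%VS & y = row_mx 0 c.
Proof.
elim: rs y => [|x s IH] y.
  rewrite /= span_nil memv0 => /eqP ->; exists 0; first exact: mem0v.
  by rewrite row_mx0.
rewrite /= span_cons => /memv_addP [y1 /vlineP [k ->]] [y2 /IH [c Hc ->] ->].
exists (k *: x + c).
  rewrite span_cons; apply: memv_add => //; apply: memvZ; exact: memv_line.
by rewrite scale_row_mx add_row_mx scaler0 addr0.
Qed.

Lemma free_row0 n' N (rs : seq (bvec N)) :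
  free rs -> free (map (row_mx (0 : bvec n')) rs).
Proof.
elim: rs => [|x s IH]; first by move=> _; exact: nil_free.
rewrite /= !free_cons => /andP [Hx Hs].
rewrite IH // andbT; apply/negP => /span_row0 [c Hc] /eq_row_mx [_ E].
by move: Hx; rewrite E Hc.
Qed.

Lemma ext_decomp n' N (r1 : bvec N) rs x :
  x \in ext_code n' (r1 :: rs) ->
  exists k, exists2 c, c \in <<rs>>%VS & x = row_mx (k *: const_mx 1) (k *: r1 + c).
Proof.
rewrite /ext_code /= span_cons => /memv_addP [y1 /vlineP [k ->]] [y2 /span_row0 [c Hc ->] ->].
exists k, c => //.
by rewrite scale_row_mx add_row_mx addr0.
Qed.

Lemma ext_free n' N (r1 : bvec N) rs : (0 < n')%N -> free (r1 :: rs) ->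
  free (ext_gens n' (r1 :: rs)).
Proof.
move=> hn; rewrite /= !free_cons => /andP [H1 H2]; rewrite free_row0 // andbT.
apply/negP => /span_row0 [c _] /eq_row_mx [E _].
move/matrixP: E => /(_ 0 (Ordinal hn)); rewrite !mxE => /eqP; by [].
Qed.


Lemma bigmin_le (I : finType) (P : pred I) (F : I -> nat) d j :
  P j -> (\big[minn/d]_(i | P i) F i <= F j)%N.
Proof.
move=> Pj; rewrite unlock /=.
have : j \in index_enum I by rewrite mem_index_enum.
elim: (index_enum I) => [|x s IH] //=; rewrite inE => /orP [/eqP <-|/IH H].
  by rewrite Pj geq_minl.
case: (P x) => //; exact: leq_trans (geq_minr _ _) H.
Qed.

Lemma wt_le n (v : bvec n) : (wt v <= n)%N.
Proof. by rewrite /wt; apply: leq_trans (max_card _) _; rewrite card_ord. Qed.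

Lemma ext_nz n' N (C : bcode N) (r1 : bvec N) rs x :
  basis_of C (r1 :: rs) ->
  x \in ext_code n' (r1 :: rs) -> x != 0 ->
  exists k : bool, exists c, [/\ c \in C, c != 0 & x = row_mx (if k then const_mx 1 else 0) c].
Proof.
move=> hb /ext_decomp [k [c Hc ->]] Hx.
have hC : C = <<r1 :: rs>>%VS by rewrite (span_basis hb).
have Hc' : c \in C by rewrite hC span_cons -[c]add0r; apply: memv_add => //; exact: mem0v.
have Hr1 : r1 \in C by rewrite hC; apply: memv_span; exact: mem_head.
case: (F2_cases k) => Ek; subst k.
  exists false, c; split => //; last by rewrite scale0r scale0r add0r.
  by apply: contraNneq Hx => ->; rewrite scale0r scale0r add0r row_mx0.
exists true, (r1 + c); split => //; last by rewrite !scale1r.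
  exact: memvD.
apply/negP => /eqP E; move: (basis_free hb); rewrite free_cons => /andP [H _].
move: H; have -> : r1 = - c by apply/eqP; rewrite -addr_eq0 E.
by rewrite memvN Hc.
Qed.

Lemma wt_ext n' N (c : bvec N) (k : bool) :
  wt (row_mx (if k then const_mx 1 else 0 : bvec n') c) = ((if k then n' else 0) + wt c)%N.
Proof. by rewrite wt_row_mx; case: k; rewrite ?wt1 ?wt0. Qed.


Lemma ext_main n' N (C : bcode N) r1 r2 rs (lo hi : nat) :
  basis_of C [:: r1, r2 & rs] ->
  (forall c, c \in C -> c != 0 -> (lo <= wt c <= hi)%N) ->
  wt r1 = hi -> wt r2 = lo -> (0 < n')%N -> (n' + hi = 2 * lo)%N -> (hi < 2 * lo)%N ->
  let C' := ext_code n' [:: r1, r2 & rs] in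
  [/\ \dim C' = \dim C, wmin C' = lo, wmax C' = (2 * lo)%N, minimal_code C' &
    ((4 %| n')%N -> (forall c, c \in C -> (4 %| wt c)%N) -> self_orthogonal C')].
Proof.
move=> hb hC hr1 hr2 hn hnl hhl C'.
have Cspan : C = <<[:: r1, r2 & rs]>>%VS by rewrite (span_basis hb).
have Cr1 : r1 \in C by rewrite Cspan; apply: memv_span; rewrite !inE eqxx.
have Cr2 : r2 \in C by rewrite Cspan; apply: memv_span; rewrite !inE eqxx orbT.
have r2nz : r2 != 0 by apply: (free_not0 (basis_free hb)); rewrite !inE eqxx orbT.
have hlo : (0 < lo)%N by move: (hC _ Cr2 r2nz); lia.
have Hw : forall x, x \in C' -> x != 0 -> exists k : bool, exists c,
    [/\ c \in C, c != 0, x = row_mx (if k then const_mx 1 else 0 : bvec n') c,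
        wt x = ((if k then n' else 0) + wt c)%N & (lo <= wt c <= hi)%N].
  move=> x Hx Hnz; have [k [c [Hc Hcnz Ex]]] := ext_nz hb Hx Hnz.
  exists k, c; split => //; last exact: hC.
  by rewrite Ex wt_ext.
have Hb : forall x, x \in C' -> x != 0 -> (lo <= wt x <= 2 * lo)%N.
  move=> x Hx Hnz; have [k [c [_ _ _ -> H]]] := Hw x Hx Hnz; case: k; lia.
have e1 : row_mx (const_mx 1) r1 \in C' by apply: memv_span; rewrite mem_head.
have e2 : row_mx 0 r2 \in C' by apply: memv_span; rewrite !inE eqxx orbT.
have e2nz : row_mx (0 : bvec n') r2 != 0 by rewrite row_mx_eq0 negb_and r2nz orbT.
split.
- move: (ext_free hn (basis_free hb)) => /eqP.
  rewrite /C' /ext_code => ->.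
  move: (basis_free hb) => /eqP; rewrite -Cspan => ->.
  by rewrite /= size_map.
- apply/eqP; rewrite eqn_leq; apply/andP; split.
    have := @bigmin_le _ (fun v : bvec (n' + N) => (v \in C') && (v != 0)) (@wt _) (n' + N)%N (row_mx 0 r2).
    rewrite e2 e2nz wt_row_mx wt0 hr2 => /(_ isT); exact.
  apply: (big_ind (fun x => lo <= x)%N).
  + have := wt_le r2; rewrite hr2; lia.
  + by move=> x y; rewrite leq_min => -> ->.
  + by move=> x /andP [Hx Hnz]; have := Hb x Hx Hnz; lia.
- apply/eqP; rewrite eqn_leq; apply/andP; split.
    apply/bigmax_leqP => x Hx; case: (eqVneq x 0) => [->|Hnz]; first by rewrite wt0.
    by have := Hb x Hx Hnz; lia.
  apply: leq_trans (leq_bigmax_cond _ e1); rewrite wt_row_mx wt1 hr1; lia.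
- move=> u v Hu Hv Hunz Hvnz Hsub; case: (eqVneq u v) => // Hne.
  have Hw' : v - u \in C' by apply: memvB.
  have Hwnz : v - u != 0 by rewrite subr_eq0 eq_sym.
  have Ewt := wt_sub Hsub.
  have Hle : (wt u <= wt v)%N by rewrite !wtE; apply: subset_leq_card.
  have := Hb _ Hu Hunz; have := Hb _ Hv Hvnz; have := Hb _ Hw' Hwnz; rewrite Ewt => /andP [B1 B1'] /andP [B2 B2'] /andP [B3 B3'].
  have Hwu : wt u = lo by move: B1 B1' B2 B2' B3 B3' Hle; clear; lia.
  have Hww : wt (v - u) = lo by rewrite Ewt; move: B1 B1' B2 B2' B3 B3' Hle; clear; lia.
  have Hwv : wt v = (2 * lo)%N by move: B1 B1' B2 B2' B3 B3' Hle; clear; lia.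
  have [[] [cu [Hcu _ Eu Ewu Bu]]] := Hw u Hu Hunz; first by move: Hwu Ewu hn; case/andP: Bu; clear; lia.
  have [[] [cw [Hcw _ Ew Eww Bw]]] := Hw _ Hw' Hwnz; first by move: Hww Eww hn; case/andP: Bw; clear; lia.
  have Ev : v = row_mx 0 (cw + cu) by rewrite -[v](subrK u) Ew Eu add_row_mx addr0.
  have Hcv : cw + cu \in C by apply: memvD.
  have Hcvnz : cw + cu != 0 by apply: contraNneq Hvnz => E; rewrite Ev E row_mx0.
  case/andP: (hC _ Hcv Hcvnz); move: Hwv hhl; rewrite Ev wt_row_mx wt0 /=; clear; lia.
- move=> h4 hC4 u v Hu Hv.
  have H4 : forall x, x \in C' -> (4 %| wt x)%N.
    move=> x Hx; case: (eqVneq x 0) => [->|Hnz]; first by rewrite wt0.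
    have [k [c [Hc _ _ -> _]]] := Hw x Hx Hnz.
    by case: k; rewrite /= ?add0n ?dvdn_add ?hC4.
  have := wt_add u v; have := H4 _ Hu; have := H4 _ Hv; have := H4 _ (memvD Hu Hv).
  rewrite dotpE => /dvdnP [a ->] /dvdnP [b ->] /dvdnP [c ->] E.
  have -> : #|supp u :&: supp v| = (2 * (b + c - a))%N by lia.
  by rewrite natrM (_ : 2%:R = 0 :> 'F_2) ?mul0r; last by apply/val_inj.
Qed.

Unset Implicit Arguments.


Theorem proposition5p3 (m : nat) (hm : (3 <= m)%N)
  (C : bcode (2 ^ (2 * m - 2) + 2 ^ (m - 1) - 1))
  (hdim : \dim C = (2 * m - 1)%N)
  (hw : forall w : nat,
     (exists2 v, (v \in C) && (v != 0) & wt v = w) <->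
     w \in [:: 2 ^ (2 * m - 3); 2 ^ (2 * m - 3) + 2 ^ (m - 2);
               2 ^ (2 * m - 3) + 2 ^ (m - 1)]%N)
  (r : seq (bvec (2 ^ (2 * m - 2) + 2 ^ (m - 1) - 1)))
  (hbasis : basis_of C r)
  (hr1 : wt r`_0 = (2 ^ (2 * m - 3) + 2 ^ (m - 1))%N)
  (hr2 : wt r`_1 = (2 ^ (2 * m - 3))%N) :
  let C' := ext_code (2 * 2 ^ (2 * m - 3) - (2 ^ (2 * m - 3) + 2 ^ (m - 1)))%N r in
  ((2 * 2 ^ (2 * m - 3) - (2 ^ (2 * m - 3) + 2 ^ (m - 1))
        + (2 ^ (2 * m - 2) + 2 ^ (m - 1) - 1) = 3 * 2 ^ (2 * m - 3) - 1)%N /\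
      \dim C' = (2 * m - 1)%N /\
      wmin C' = (2 ^ (2 * m - 3))%N /\
      wmax C' = (2 ^ (2 * m - 2))%N /\
      minimal_code C' /\
      ~ ashikhmin_barg C' /\
      ((4 <= m)%N -> self_orthogonal C')).
Proof.
move=> C'; rewrite {}/C'.
have e1 : (2 ^ (m - 1) = 2 * 2 ^ (m - 2))%N.
  have -> : (m - 1 = (m - 2).+1)%N by lia.
  by rewrite expnS.
have e2 : (2 ^ (2 * m - 3) = 2 * (2 ^ (m - 2) * 2 ^ (m - 2)))%N.
  have -> : (2 * m - 3 = (m - 2 + (m - 2)).+1)%N by lia.
  by rewrite expnS expnD.
have e3 : (2 ^ (2 * m - 2) = 4 * (2 ^ (m - 2) * 2 ^ (m - 2)))%N.
  have -> : (2 * m - 2 = (m - 2 + (m - 2)).+2)%N by lia.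
  by rewrite !expnS expnD mulnA.
have hp : (2 <= 2 ^ (m - 2))%N.
  by rewrite -[X in (X <= _)%N]expn1 leq_exp2l //; lia.
have hp4 : (4 <= m)%N -> (4 %| 2 ^ (m - 2))%N.
  move=> h4; have -> : (m - 2 = 2 + (m - 4))%N by lia.
  by rewrite expnD dvdn_mulr.
move: e1 e2 e3 hp hp4 hw; set p := (2 ^ (m - 2))%N; clearbody p => e1 e2 e3 hp hp4 hw.
have hA : (2 * p <= p * p)%N by rewrite leq_mul2r hp orbT.
have hA4 : (4 %| p)%N -> (4 %| p * p)%N by move=> h; rewrite dvdn_mulr.
move: hA hA4 e2 e3; set A := (p * p)%N; clearbody A => hA hA4 e2 e3.
have hC : forall c, c \in C -> c != 0 ->
    (2 ^ (2 * m - 3) <= wt c <= 2 ^ (2 * m - 3) + 2 ^ (m - 1))%N.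
  move=> c Hc Hnz; have : wt c \in [:: (2 ^ (2 * m - 3))%N; (2 ^ (2 * m - 3) + p)%N;
              (2 ^ (2 * m - 3) + 2 ^ (m - 1))%N].
    by apply/hw; exists c => //; rewrite Hc Hnz.
  rewrite !inE => /or3P [] /eqP ->; apply/andP; split; lia.
move: (basis_free hbasis) => /eqP; rewrite (span_basis hbasis) hdim => hsz.
case: r hbasis hr1 hr2 hsz => [|r1 [|r2 rs]] hbasis hr1 hr2 hsz; try (simpl in hsz; lia).
set n' := (2 * 2 ^ (2 * m - 3) - (2 ^ (2 * m - 3) + 2 ^ (m - 1)))%N.
have s1 : (0 < n')%N by rewrite /n'; lia.
have s2 : (n' + (2 ^ (2 * m - 3) + 2 ^ (m - 1)) = 2 * 2 ^ (2 * m - 3))%N by rewrite /n'; lia.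
have s3 : (2 ^ (2 * m - 3) + 2 ^ (m - 1) < 2 * 2 ^ (2 * m - 3))%N by lia.
have [Hdim Hmin Hmax Hminl Hso] := @ext_main n' _ C r1 r2 rs _ _ hbasis hC hr1 hr2 s1 s2 s3.
split; first by rewrite /n'; lia.
split; first by rewrite Hdim.
split; first by [].
split; first by rewrite Hmax; lia.
split; first by [].
split.
  rewrite /ashikhmin_barg Hmin Hmax.
  have hlo : (0 < 2 ^ (2 * m - 3))%N by rewrite expn_gt0.
  move: hlo; move: (2 ^ (2 * m - 3))%N => x hx.
  rewrite natrM invfM mulrCA mulfV ?mulr1; last by rewrite pnatr_eq0 -lt0n.
  by rewrite ltxx.
move=> h4; apply: Hso.
- have := hA4 (hp4 h4); rewrite /n'; move/dvdnP: (hp4 h4) => [q Eq] /dvdnP [t Et].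
  apply/dvdnP; exists (2 * t - 2 * q)%N; lia.
- move=> c Hc; case: (eqVneq c 0) => [->|Hnz]; first by rewrite wt0.
  have : wt c \in [:: (2 ^ (2 * m - 3))%N; (2 ^ (2 * m - 3) + p)%N;
              (2 ^ (2 * m - 3) + 2 ^ (m - 1))%N].
    by apply/hw; exists c => //; rewrite Hc Hnz.
  have := hA4 (hp4 h4); move/dvdnP: (hp4 h4) => [q Eq] /dvdnP [t Et].
  rewrite !inE => /or3P [] /eqP ->; apply/dvdnP.
  + by exists (2 * t)%N; lia.
  + by exists (2 * t + q)%N; lia.
  + by exists (2 * t + 2 * q)%N; lia.
Qed.
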